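(* Let $S'$ be a finite poset that has an induced sub-poset isomorphic or anti-isomorphic to one of the posets $S_1,\dots,S_5$ below. Then there exists a stochastically monotone generator on $S'$ which is not realizably monotone. $S_1=\{w,a,b,c,d\}$: $w<a$, $a<b<d$, $a<c<d$, $b,c$ incomparable. $S_2=\{a,b,c,w,d\}$: $a<b<d$, $a<c<d$, $a<w<d$, $b,c,w$ pairwise incomparable. $S_3=\{a,b,c,w,d\}$: $a<b<d$, $a<c<w<d$, $b$ incomparable to $c,w$. $S_4=\{a,b,c,d,w\}$ with strict relations exactly $a<w,a<c,a<d,w<c,b<c,b<d$. $S_5=\{a,b,c,d,w\}$: $a,b<c,d<w$, with $a,b$ incomparable and $c,d$ incomparable.
   Context: A generator on a finite poset $S$ is a matrix $L$ with $L_{x,y}\ge0$ for $x\ne y$ and rows summing to $0$; $L_{x,\Gamma}=\sum_{z\in\Gamma}L_{x,z}$. $L$ is stochastically monotone iff for every up-set $\Gamma$ and $x\le y\notin\Gamma$, $L_{x,\Gamma}\le L_{y,\Gamma}$, and for every down-set $\Gamma$ and $y\ge x\notin\Gamma$, $L_{x,\Gamma}\ge L_{y,\Gamma}$. $L$ is realizably monotone iff there exists $\Lambda:\mathcal M\to[0,\infty)$, $\mathcal M$ the set of increasing maps $S\to S$, with $L_{x,y}=\sum_{f\in\mathcal M:f(x)=y}\Lambda(f)$ for all $x\ne y$. An induced sub-poset is a subset with the restricted order. *)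

(* Defs.v *)
From HB Require Import structures.
From mathcomp Require Import all_boot all_order all_algebra.
Set Implicit Arguments. Unset Strict Implicit. Unset Printing Implicit Defensive.
Import Order.TTheory GRing.Theory Num.Theory.
Local Open Scope ring_scope.

Section Generators.
Variables (d : Order.disp_t) (T : finPOrderType d) (R : realFieldType).

Definition Lset (L : T -> T -> R) (x : T) (G : {set T}) : R :=
  \sum_(z in G) L x z.

Definition is_generator (L : T -> T -> R) : Prop :=
  (forall x y : T, x != y -> 0 <= L x y) /\
  (forall x : T, \sum_(z : T) L x z = 0).

Definition upset (G : {set T}) : Prop :=
  forall x y : T, x \in G -> (x <= y)%O -> y \in G.

Definition downset (G : {set T}) : Prop :=
  forall x y : T, x \in G -> (y <= x)%O -> y \in G.

Definition stoch_monotone (L : T -> T -> R) : Prop :=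
  (forall (G : {set T}) (x y : T), upset G -> (x <= y)%O -> y \notin G ->
      Lset L x G <= Lset L y G) /\
  (forall (G : {set T}) (x y : T), downset G -> (x <= y)%O -> x \notin G ->
      Lset L y G <= Lset L x G).

Definition increasing (f : {ffun T -> T}) : bool :=
  [forall x, forall y, (x <= y)%O ==> (f x <= f y)%O].

Definition realizably_monotone (L : T -> T -> R) : Prop :=
  exists Lam : {ffun T -> T} -> R,
    (forall f, increasing f -> 0 <= Lam f) /\
    (forall x y : T, x != y ->
       L x y = \sum_(f : {ffun T -> T} | increasing f && (f x == y)) Lam f).

End Generators.

(* The five posets S_1..S_5, on the carrier 'I_5; the order is given by the
   reflexive closure of an explicitly transitively closed list of strict
   relations (pairs of indices). *)
Definition le_of (s : seq (nat * nat)) (x y : 'I_5) : bool :=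
  (x == y) || ((nat_of_ord x, nat_of_ord y) \in s).

(* S1: w=0 a=1 b=2 c=3 d=4 ; w<a, a<b<d, a<c<d *)
Definition S1_rel := [:: (0,1); (0,2); (0,3); (0,4); (1,2); (1,3); (1,4); (2,4); (3,4)]%N.
(* S2: a=0 b=1 c=2 w=3 d=4 ; a<b<d, a<c<d, a<w<d *)
Definition S2_rel := [:: (0,1); (0,2); (0,3); (0,4); (1,4); (2,4); (3,4)]%N.
(* S3: a=0 b=1 c=2 w=3 d=4 ; a<b<d, a<c<w<d *)
Definition S3_rel := [:: (0,1); (0,2); (0,3); (0,4); (1,4); (2,3); (2,4); (3,4)]%N.
(* S4: a=0 b=1 c=2 d=3 w=4 ; a<w, a<c, a<d, w<c, b<c, b<d *)
Definition S4_rel := [:: (0,4); (0,2); (0,3); (4,2); (1,2); (1,3)]%N.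
(* S5: a=0 b=1 c=2 d=3 w=4 ; a,b < c,d < w *)
Definition S5_rel := [:: (0,2); (0,3); (1,2); (1,3); (2,4); (3,4); (0,4); (1,4)]%N.

Definition S_rel (k : nat) : seq (nat * nat) :=
  match k with
  | 1 => S1_rel | 2 => S2_rel | 3 => S3_rel | 4 => S4_rel | _ => S5_rel
  end%N.

Definition has_induced_iso d (T : finPOrderType d) (le : 'I_5 -> 'I_5 -> bool) : Prop :=
  exists g : 'I_5 -> T, injective g /\ forall x y, (g x <= g y)%O = le x y.

Definition has_induced_anti_iso d (T : finPOrderType d) (le : 'I_5 -> 'I_5 -> bool) : Prop :=
  exists g : 'I_5 -> T, injective g /\ forall x y, (g x <= g y)%O = le y x.

(* Main.v *)
Require Import Defs.
From HB Require Import structures.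
From mathcomp Require Import all_boot all_order all_algebra.
Import Order.TTheory GRing.Theory Num.Theory.
Local Open Scope ring_scope.

Definition tup := (bool * bool * bool * bool * bool)%type.
Definition get (v : tup) (i : nat) : bool :=
  let '(b0, b1, b2, b3, b4) := v in
  match i with 0 => b0 | 1 => b1 | 2 => b2 | 3 => b3 | _ => b4 end%N.
Definition mk (f : nat -> bool) : tup := (f 0%N, f 1%N, f 2%N, f 3%N, f 4%N).
Definition idx : seq nat := iota 0 5.
Definition lenat (s : seq (nat*nat)) (i j : nat) : bool := (i == j) || ((i, j) \in s).
Definition upb s v := all (fun i => all (fun j => (get v i && lenat s i j) ==> get v j) idx) idx.
Definition downb s v := all (fun i => all (fun j => (get v j && lenat s i j) ==> get v i) idx) idx.
Definition disjb (v w : tup) := all (fun i => ~~ (get v i && get w i)) idx.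
Definition subb (v w : tup) := all (fun i => get v i ==> get w i) idx.
Definition imgtype s (i : nat) : tup * tup := (mk (fun j => lenat s j i), mk (fun j => lenat s i j)).
Definition validb s (t : tup * tup) : bool :=
  [&& downb s t.1, upb s t.2,
      all (fun i => all (fun j => (get t.1 i && get t.2 j) ==> lenat s i j) idx) idx &
      disjb t.1 t.2 || has (fun i => t == imgtype s i) idx].
Definition bits (n : nat) : tup := mk (fun i => odd (n %/ 2 ^ i)).
Definition allsub : seq tup := map bits (iota 0 32).
Definition tbltype := seq ((tup*tup) * seq nat).
Definition rate (tbl : tbltype) (t : tup*tup) (i : nat) : nat :=
  nth 0%N (head [::] [seq x.2 | x <- tbl & x.1 == t]) i.
Definition sumV (r : nat -> nat) (v : tup) : nat :=
  foldr (fun i acc => (if get v i then r i else 0) + acc)%N 0%N idx.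
Definition letype (t1 t2 : tup*tup) := subb t1.1 t2.1 && subb t2.2 t1.2.
Definition nthr (r : seq nat) (i : nat) : nat := nth 0%N r i.
Definition mono_body (u dn : bool) (V : tup) (sums : seq ((tup*tup)*nat)) :=
  all (fun x1 => all (fun x2 => letype x1.1 x2.1 ==>
     (((u && disjb V x2.1.1) ==> (x1.2 <= x2.2)%N) &&
      ((dn && disjb V x1.1.2) ==> (x2.2 <= x1.2)%N))) sums) sums.
Definition check_mono s (tbl : tbltype) :=
  all (fun V => mono_body (upb s V) (downb s V) V [seq (x.1, sumV (nthr x.2) V) | x <- tbl]) allsub.
Definition check_rate (tbl : tbltype) :=
  all (fun x => [seq rate tbl x.1 i | i <- idx] == [seq nthr x.2 i | i <- idx]) tbl.
Definition check_valid s (tbl : tbltype) :=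
  all (fun D => all (fun U => validb s (D,U) ==> ((D,U) \in map fst tbl)) allsub) allsub.
Definition phiz (phi : seq (seq int)) i j : int := nth 0 (nth [::] phi i) j.
Definition cost phi (v : seq nat) : int := foldr (fun i acc => phiz phi i (nth 0%N v i) + acc) 0 idx.
Definition incb s (v : seq nat) :=
  all (fun i => all (fun j => lenat s i j ==> lenat s (nth 0%N v i) (nth 0%N v j)) idx) idx.
Fixpoint allseqs n : seq (seq nat) :=
  if n is n'.+1 then flatten [seq [seq a :: v | v <- allseqs n'] | a <- idx] else [:: [::]].
Definition check_cert s phi := all (fun v => incb s v ==> (0 <= cost phi v)%R) (allseqs 5).
Definition check_diag phi := all (fun i => phiz phi i i == 0) idx.
Definition check_neg s (tbl : tbltype) phi :=
  (foldr (fun i acc => foldr (fun j acc' => phiz phi i j * (rate tbl (imgtype s i) j)%:Z + acc') 0 idx + acc) 0 idx < 0)%R.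
Definition check_all s (tbl : tbltype) phi :=
  [&& check_mono s tbl, check_rate tbl, check_valid s tbl, check_cert s phi, check_diag phi & check_neg s tbl phi].

Lemma get_mk f i : (i < 5)%N -> get (mk f) i = f i.
Proof. by case: i => [|[|[|[|[|i]]]]]. Qed.

Lemma eq_mk f f' : (forall i, (i < 5)%N -> f i = f' i) -> mk f = mk f'.
Proof. by move=> H; rewrite /mk !H. Qed.

Lemma in_idx i : (i \in idx) = (i < 5)%N.
Proof. by rewrite mem_iota. Qed.

Lemma in_allsub v : v \in allsub.
Proof. by case: v => [[[[[] []] []] []] []]; vm_compute. Qed.

Lemma sum_foldr (V : nmodType) (F : nat -> V) :
  \sum_(i < 5) F i = foldr (fun i acc => F i + acc) 0 idx.
Proof. by rewrite -(big_mkord (fun _ => true) F) /index_iota /= !big_cons big_nil. Qed.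

Lemma natr_sumV (V : pzSemiRingType) r v :
  (sumV r v)%:R = \sum_(i < 5) (if get v i then r i else 0%N)%:R :> V.
Proof.
rewrite (@sum_foldr _ (fun i => (if get v i then r i else 0%N)%:R)) /sumV /=.
by rewrite !natrD.
Qed.

Lemma eq_sumV r r' v : (forall i, (i < 5)%N -> r i = r' i) -> sumV r v = sumV r' v.
Proof. by move=> H; rewrite /sumV /= !H. Qed.


Lemma in_allseqs (v : seq nat) : all (fun a => a < 5)%N v -> v \in allseqs (size v).
Proof.
elim: v => [|a v IH]; first by [].
move=> /andP[Ha Hv].
change (a :: v \in flatten [seq [seq a0 :: w | w <- allseqs (size v)] | a0 <- idx]).
apply/flatten_mapP; exists a; first by rewrite in_idx.
by apply: map_f; apply: IH.
Qed.

Lemma dsum_foldr (h : nat -> nat -> int) :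
  \sum_(a < 5) \sum_(b < 5) h a b =
  foldr (fun i acc => foldr (fun j acc' => h i j + acc') 0 idx + acc) 0 idx.
Proof. by rewrite (@sum_foldr _ (fun a => \sum_(b < 5) h a b)) /= !sum_foldr. Qed.

Definition rel1 : seq (nat*nat) := [:: (0,1); (0,2); (0,3); (0,4); (1,2); (1,3); (1,4); (2,4); (3,4)]%N.
Definition tbl1 : seq ((tup*tup) * seq nat) :=
  [:: (((true, false, false, false, false), (true, true, true, true, true)), [:: 0; 0; 0; 0; 0]%N);
  (((true, true, false, false, false), (false, true, true, true, true)), [:: 1; 0; 1; 0; 0]%N);
  (((true, true, true, false, false), (false, false, true, false, true)), [:: 1; 0; 0; 0; 1]%N);
  (((true, true, false, true, false), (false, false, false, true, true)), [:: 1; 0; 0; 0; 1]%N);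
  (((true, true, true, true, true), (false, false, false, false, true)), [:: 0; 0; 1; 1; 0]%N);
  (((true, true, true, true, true), (false, false, false, false, false)), [:: 0; 0; 0; 0; 0]%N);
  (((true, true, true, true, false), (false, false, false, false, false)), [:: 0; 0; 0; 0; 1]%N);
  (((true, true, true, true, false), (false, false, false, false, true)), [:: 0; 0; 1; 1; 1]%N);
  (((true, true, false, true, false), (false, false, false, false, false)), [:: 0; 0; 1; 0; 1]%N);
  (((true, true, false, true, false), (false, false, false, false, true)), [:: 0; 0; 1; 1; 1]%N);
  (((true, true, true, false, false), (false, false, false, false, false)), [:: 0; 0; 0; 0; 1]%N);
  (((true, true, true, false, false), (false, false, false, false, true)), [:: 0; 1; 1; 0; 1]%N);
  (((true, true, false, false, false), (false, false, false, false, false)), [:: 0; 0; 1; 0; 1]%N);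
  (((true, true, false, false, false), (false, false, false, false, true)), [:: 1; 0; 1; 0; 1]%N);
  (((true, true, false, false, false), (false, false, true, false, true)), [:: 1; 0; 0; 0; 1]%N);
  (((true, true, false, false, false), (false, false, false, true, true)), [:: 1; 0; 1; 0; 0]%N);
  (((true, true, false, false, false), (false, false, true, true, true)), [:: 1; 0; 1; 0; 0]%N);
  (((true, false, false, false, false), (false, false, false, false, false)), [:: 0; 0; 1; 0; 1]%N);
  (((true, false, false, false, false), (false, false, false, false, true)), [:: 1; 0; 1; 0; 1]%N);
  (((true, false, false, false, false), (false, false, true, false, true)), [:: 1; 0; 0; 0; 1]%N);
  (((true, false, false, false, false), (false, false, false, true, true)), [:: 1; 0; 1; 0; 0]%N);
  (((true, false, false, false, false), (false, false, true, true, true)), [:: 1; 0; 1; 0; 0]%N);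
  (((true, false, false, false, false), (false, true, true, true, true)), [:: 1; 0; 1; 0; 0]%N);
  (((false, false, false, false, false), (false, false, false, false, false)), [:: 1; 0; 1; 0; 1]%N);
  (((false, false, false, false, false), (false, false, false, false, true)), [:: 1; 0; 1; 0; 1]%N);
  (((false, false, false, false, false), (false, false, true, false, true)), [:: 1; 0; 1; 0; 0]%N);
  (((false, false, false, false, false), (false, false, false, true, true)), [:: 1; 0; 1; 0; 0]%N);
  (((false, false, false, false, false), (false, false, true, true, true)), [:: 1; 0; 1; 0; 0]%N);
  (((false, false, false, false, false), (false, true, true, true, true)), [:: 1; 0; 0; 0; 0]%N);
  (((false, false, false, false, false), (true, true, true, true, true)), [:: 0; 0; 0; 0; 0]%N)].
Definition phi1 : seq (seq int) := [:: [:: 0%Z; 1%Z; 1%Z; -1%Z; 1%Z]; [:: 1%Z; 0%Z; 0%Z; 1%Z; 1%Z]; [:: 0%Z; 1%Z; 0%Z; 1%Z; 0%Z]; [:: 0%Z; 1%Z; 1%Z; 0%Z; 0%Z]; [:: 1%Z; 1%Z; -1%Z; -1%Z; 0%Z]].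

Definition rel1d : seq (nat*nat) := [:: (1,0); (2,0); (3,0); (4,0); (2,1); (3,1); (4,1); (4,2); (4,3)]%N.
Definition tbl1d : seq ((tup*tup) * seq nat) :=
  [:: (((true, true, true, true, true), (true, false, false, false, false)), [:: 0; 0; 0; 0; 0]%N);
  (((false, true, true, true, true), (true, true, false, false, false)), [:: 1; 0; 1; 0; 0]%N);
  (((false, false, true, false, true), (true, true, true, false, false)), [:: 1; 0; 0; 0; 1]%N);
  (((false, false, false, true, true), (true, true, false, true, false)), [:: 1; 0; 0; 0; 1]%N);
  (((false, false, false, false, true), (true, true, true, true, true)), [:: 0; 0; 1; 1; 0]%N);
  (((false, false, false, false, false), (true, true, true, true, true)), [:: 0; 0; 0; 0; 0]%N);
  (((false, false, false, false, false), (true, true, true, true, false)), [:: 0; 0; 0; 0; 1]%N);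
  (((false, false, false, false, true), (true, true, true, true, false)), [:: 0; 0; 1; 1; 1]%N);
  (((false, false, false, false, false), (true, true, false, true, false)), [:: 0; 0; 1; 0; 1]%N);
  (((false, false, false, false, true), (true, true, false, true, false)), [:: 0; 0; 1; 1; 1]%N);
  (((false, false, false, false, false), (true, true, true, false, false)), [:: 0; 0; 0; 0; 1]%N);
  (((false, false, false, false, true), (true, true, true, false, false)), [:: 0; 1; 1; 0; 1]%N);
  (((false, false, false, false, false), (true, true, false, false, false)), [:: 0; 0; 1; 0; 1]%N);
  (((false, false, false, false, true), (true, true, false, false, false)), [:: 1; 0; 1; 0; 1]%N);
  (((false, false, true, false, true), (true, true, false, false, false)), [:: 1; 0; 0; 0; 1]%N);
  (((false, false, false, true, true), (true, true, false, false, false)), [:: 1; 0; 1; 0; 0]%N);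
  (((false, false, true, true, true), (true, true, false, false, false)), [:: 1; 0; 1; 0; 0]%N);
  (((false, false, false, false, false), (true, false, false, false, false)), [:: 0; 0; 1; 0; 1]%N);
  (((false, false, false, false, true), (true, false, false, false, false)), [:: 1; 0; 1; 0; 1]%N);
  (((false, false, true, false, true), (true, false, false, false, false)), [:: 1; 0; 0; 0; 1]%N);
  (((false, false, false, true, true), (true, false, false, false, false)), [:: 1; 0; 1; 0; 0]%N);
  (((false, false, true, true, true), (true, false, false, false, false)), [:: 1; 0; 1; 0; 0]%N);
  (((false, true, true, true, true), (true, false, false, false, false)), [:: 1; 0; 1; 0; 0]%N);
  (((false, false, false, false, false), (false, false, false, false, false)), [:: 1; 0; 1; 0; 1]%N);
  (((false, false, false, false, true), (false, false, false, false, false)), [:: 1; 0; 1; 0; 1]%N);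
  (((false, false, true, false, true), (false, false, false, false, false)), [:: 1; 0; 1; 0; 0]%N);
  (((false, false, false, true, true), (false, false, false, false, false)), [:: 1; 0; 1; 0; 0]%N);
  (((false, false, true, true, true), (false, false, false, false, false)), [:: 1; 0; 1; 0; 0]%N);
  (((false, true, true, true, true), (false, false, false, false, false)), [:: 1; 0; 0; 0; 0]%N);
  (((true, true, true, true, true), (false, false, false, false, false)), [:: 0; 0; 0; 0; 0]%N)].
Definition phi1d : seq (seq int) := [:: [:: 0%Z; 1%Z; 1%Z; -1%Z; 1%Z]; [:: 1%Z; 0%Z; 0%Z; 1%Z; 1%Z]; [:: 0%Z; 1%Z; 0%Z; 1%Z; 0%Z]; [:: 0%Z; 1%Z; 1%Z; 0%Z; 0%Z]; [:: 1%Z; 1%Z; -1%Z; -1%Z; 0%Z]].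

Definition rel2 : seq (nat*nat) := [:: (0,1); (0,2); (0,3); (0,4); (1,4); (2,4); (3,4)]%N.
Definition tbl2 : seq ((tup*tup) * seq nat) :=
  [:: (((true, false, false, false, false), (true, true, true, true, true)), [:: 0; 0; 0; 1; 0]%N);
  (((true, true, false, false, false), (false, true, false, false, true)), [:: 1; 0; 0; 1; 0]%N);
  (((true, false, true, false, false), (false, false, true, false, true)), [:: 1; 0; 0; 0; 1]%N);
  (((true, false, false, true, false), (false, false, false, true, true)), [:: 1; 0; 0; 0; 0]%N);
  (((true, true, true, true, true), (false, false, false, false, true)), [:: 0; 0; 1; 1; 0]%N);
  (((true, true, true, true, true), (false, false, false, false, false)), [:: 0; 0; 0; 0; 0]%N);
  (((true, true, true, true, false), (false, false, false, false, false)), [:: 0; 0; 1; 1; 1]%N);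
  (((true, true, true, true, false), (false, false, false, false, true)), [:: 0; 0; 1; 1; 1]%N);
  (((true, false, true, true, false), (false, false, false, false, false)), [:: 0; 0; 1; 1; 1]%N);
  (((true, false, true, true, false), (false, false, false, false, true)), [:: 0; 0; 1; 1; 1]%N);
  (((true, true, false, true, false), (false, false, false, false, false)), [:: 0; 0; 1; 1; 1]%N);
  (((true, true, false, true, false), (false, false, false, false, true)), [:: 0; 0; 1; 1; 1]%N);
  (((true, false, false, true, false), (false, false, false, false, false)), [:: 0; 0; 1; 1; 1]%N);
  (((true, false, false, true, false), (false, false, false, false, true)), [:: 0; 0; 1; 1; 1]%N);
  (((true, true, true, false, false), (false, false, false, false, false)), [:: 0; 0; 1; 1; 1]%N);
  (((true, true, true, false, false), (false, false, false, false, true)), [:: 0; 0; 1; 1; 1]%N);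
  (((true, false, true, false, false), (false, false, false, false, false)), [:: 0; 0; 1; 1; 1]%N);
  (((true, false, true, false, false), (false, false, false, false, true)), [:: 0; 0; 1; 1; 1]%N);
  (((true, true, false, false, false), (false, false, false, false, false)), [:: 0; 0; 1; 1; 1]%N);
  (((true, true, false, false, false), (false, false, false, false, true)), [:: 1; 0; 0; 1; 1]%N);
  (((true, false, false, false, false), (false, false, false, false, false)), [:: 1; 0; 0; 1; 1]%N);
  (((true, false, false, false, false), (false, false, false, false, true)), [:: 1; 0; 0; 1; 1]%N);
  (((true, false, false, false, false), (false, true, false, false, true)), [:: 1; 0; 0; 1; 0]%N);
  (((true, false, false, false, false), (false, false, true, false, true)), [:: 1; 0; 0; 1; 0]%N);
  (((true, false, false, false, false), (false, true, true, false, true)), [:: 1; 0; 0; 1; 0]%N);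
  (((true, false, false, false, false), (false, false, false, true, true)), [:: 1; 0; 0; 1; 0]%N);
  (((true, false, false, false, false), (false, true, false, true, true)), [:: 1; 0; 0; 1; 0]%N);
  (((true, false, false, false, false), (false, false, true, true, true)), [:: 1; 0; 0; 1; 0]%N);
  (((true, false, false, false, false), (false, true, true, true, true)), [:: 1; 0; 0; 1; 0]%N);
  (((false, false, false, false, false), (false, false, false, false, false)), [:: 1; 0; 0; 1; 1]%N);
  (((false, false, false, false, false), (false, false, false, false, true)), [:: 1; 0; 0; 1; 1]%N);
  (((false, false, false, false, false), (false, true, false, false, true)), [:: 1; 0; 0; 1; 0]%N);
  (((false, false, false, false, false), (false, false, true, false, true)), [:: 1; 0; 0; 1; 0]%N);
  (((false, false, false, false, false), (false, true, true, false, true)), [:: 1; 0; 0; 1; 0]%N);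
  (((false, false, false, false, false), (false, false, false, true, true)), [:: 1; 0; 0; 0; 0]%N);
  (((false, false, false, false, false), (false, true, false, true, true)), [:: 1; 0; 0; 0; 0]%N);
  (((false, false, false, false, false), (false, false, true, true, true)), [:: 1; 0; 0; 0; 0]%N);
  (((false, false, false, false, false), (false, true, true, true, true)), [:: 1; 0; 0; 0; 0]%N);
  (((false, false, false, false, false), (true, true, true, true, true)), [:: 0; 0; 0; 0; 0]%N)].
Definition phi2 : seq (seq int) := [:: [:: 0%Z; 0%Z; 0%Z; -1%Z; 0%Z]; [:: 1%Z; 0%Z; 1%Z; 1%Z; 1%Z]; [:: 0%Z; 0%Z; 0%Z; 1%Z; 0%Z]; [:: 0%Z; 0%Z; 0%Z; 0%Z; 0%Z]; [:: -1%Z; 0%Z; -1%Z; -1%Z; 0%Z]].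

Definition rel2d : seq (nat*nat) := [:: (1,0); (2,0); (3,0); (4,0); (4,1); (4,2); (4,3)]%N.
Definition tbl2d : seq ((tup*tup) * seq nat) :=
  [:: (((true, true, true, true, true), (true, false, false, false, false)), [:: 0; 0; 0; 1; 0]%N);
  (((false, true, false, false, true), (true, true, false, false, false)), [:: 1; 0; 0; 1; 0]%N);
  (((false, false, true, false, true), (true, false, true, false, false)), [:: 1; 0; 0; 0; 1]%N);
  (((false, false, false, true, true), (true, false, false, true, false)), [:: 1; 0; 0; 0; 0]%N);
  (((false, false, false, false, true), (true, true, true, true, true)), [:: 0; 0; 1; 1; 0]%N);
  (((false, false, false, false, false), (true, true, true, true, true)), [:: 0; 0; 0; 0; 0]%N);
  (((false, false, false, false, false), (true, true, true, true, false)), [:: 0; 0; 1; 1; 1]%N);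
  (((false, false, false, false, true), (true, true, true, true, false)), [:: 0; 0; 1; 1; 1]%N);
  (((false, false, false, false, false), (true, false, true, true, false)), [:: 0; 0; 1; 1; 1]%N);
  (((false, false, false, false, true), (true, false, true, true, false)), [:: 0; 0; 1; 1; 1]%N);
  (((false, false, false, false, false), (true, true, false, true, false)), [:: 0; 0; 1; 1; 1]%N);
  (((false, false, false, false, true), (true, true, false, true, false)), [:: 0; 0; 1; 1; 1]%N);
  (((false, false, false, false, false), (true, false, false, true, false)), [:: 0; 0; 1; 1; 1]%N);
  (((false, false, false, false, true), (true, false, false, true, false)), [:: 0; 0; 1; 1; 1]%N);
  (((false, false, false, false, false), (true, true, true, false, false)), [:: 0; 0; 1; 1; 1]%N);
  (((false, false, false, false, true), (true, true, true, false, false)), [:: 0; 0; 1; 1; 1]%N);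
  (((false, false, false, false, false), (true, false, true, false, false)), [:: 0; 0; 1; 1; 1]%N);
  (((false, false, false, false, true), (true, false, true, false, false)), [:: 0; 0; 1; 1; 1]%N);
  (((false, false, false, false, false), (true, true, false, false, false)), [:: 0; 0; 1; 1; 1]%N);
  (((false, false, false, false, true), (true, true, false, false, false)), [:: 1; 0; 0; 1; 1]%N);
  (((false, false, false, false, false), (true, false, false, false, false)), [:: 1; 0; 0; 1; 1]%N);
  (((false, false, false, false, true), (true, false, false, false, false)), [:: 1; 0; 0; 1; 1]%N);
  (((false, true, false, false, true), (true, false, false, false, false)), [:: 1; 0; 0; 1; 0]%N);
  (((false, false, true, false, true), (true, false, false, false, false)), [:: 1; 0; 0; 1; 0]%N);
  (((false, true, true, false, true), (true, false, false, false, false)), [:: 1; 0; 0; 1; 0]%N);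
  (((false, false, false, true, true), (true, false, false, false, false)), [:: 1; 0; 0; 1; 0]%N);
  (((false, true, false, true, true), (true, false, false, false, false)), [:: 1; 0; 0; 1; 0]%N);
  (((false, false, true, true, true), (true, false, false, false, false)), [:: 1; 0; 0; 1; 0]%N);
  (((false, true, true, true, true), (true, false, false, false, false)), [:: 1; 0; 0; 1; 0]%N);
  (((false, false, false, false, false), (false, false, false, false, false)), [:: 1; 0; 0; 1; 1]%N);
  (((false, false, false, false, true), (false, false, false, false, false)), [:: 1; 0; 0; 1; 1]%N);
  (((false, true, false, false, true), (false, false, false, false, false)), [:: 1; 0; 0; 1; 0]%N);
  (((false, false, true, false, true), (false, false, false, false, false)), [:: 1; 0; 0; 1; 0]%N);
  (((false, true, true, false, true), (false, false, false, false, false)), [:: 1; 0; 0; 1; 0]%N);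
  (((false, false, false, true, true), (false, false, false, false, false)), [:: 1; 0; 0; 0; 0]%N);
  (((false, true, false, true, true), (false, false, false, false, false)), [:: 1; 0; 0; 0; 0]%N);
  (((false, false, true, true, true), (false, false, false, false, false)), [:: 1; 0; 0; 0; 0]%N);
  (((false, true, true, true, true), (false, false, false, false, false)), [:: 1; 0; 0; 0; 0]%N);
  (((true, true, true, true, true), (false, false, false, false, false)), [:: 0; 0; 0; 0; 0]%N)].
Definition phi2d : seq (seq int) := [:: [:: 0%Z; 0%Z; 0%Z; -1%Z; 0%Z]; [:: 1%Z; 0%Z; 1%Z; 1%Z; 1%Z]; [:: 0%Z; 0%Z; 0%Z; 1%Z; 0%Z]; [:: 0%Z; 0%Z; 0%Z; 0%Z; 0%Z]; [:: -1%Z; 0%Z; -1%Z; -1%Z; 0%Z]].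

Definition rel3 : seq (nat*nat) := [:: (0,1); (0,2); (0,3); (0,4); (1,4); (2,3); (2,4); (3,4)]%N.
Definition tbl3 : seq ((tup*tup) * seq nat) :=
  [:: (((true, false, false, false, false), (true, true, true, true, true)), [:: 0; 1; 2; 0; 0]%N);
  (((true, true, false, false, false), (false, true, false, false, true)), [:: 0; 0; 1; 0; 1]%N);
  (((true, false, true, false, false), (false, false, true, true, true)), [:: 1; 1; 0; 0; 1]%N);
  (((true, false, true, true, false), (false, false, false, true, true)), [:: 1; 1; 0; 0; 1]%N);
  (((true, true, true, true, true), (false, false, false, false, true)), [:: 0; 1; 1; 0; 0]%N);
  (((true, true, true, true, true), (false, false, false, false, false)), [:: 0; 0; 0; 0; 0]%N);
  (((true, true, true, true, false), (false, false, false, false, false)), [:: 0; 1; 1; 0; 1]%N);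
  (((true, true, true, true, false), (false, false, false, false, true)), [:: 0; 1; 1; 0; 1]%N);
  (((true, false, true, true, false), (false, false, false, false, false)), [:: 0; 1; 1; 0; 1]%N);
  (((true, false, true, true, false), (false, false, false, false, true)), [:: 1; 1; 0; 0; 1]%N);
  (((true, true, true, false, false), (false, false, false, false, false)), [:: 0; 1; 1; 0; 1]%N);
  (((true, true, true, false, false), (false, false, false, false, true)), [:: 0; 1; 1; 0; 1]%N);
  (((true, false, true, false, false), (false, false, false, false, false)), [:: 0; 1; 1; 0; 1]%N);
  (((true, false, true, false, false), (false, false, false, false, true)), [:: 1; 1; 0; 0; 1]%N);
  (((true, false, true, false, false), (false, false, false, true, true)), [:: 1; 1; 0; 0; 1]%N);
  (((true, true, false, false, false), (false, false, false, false, false)), [:: 0; 1; 1; 0; 1]%N);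
  (((true, true, false, false, false), (false, false, false, false, true)), [:: 0; 1; 1; 0; 1]%N);
  (((true, false, false, false, false), (false, false, false, false, false)), [:: 0; 1; 1; 0; 1]%N);
  (((true, false, false, false, false), (false, false, false, false, true)), [:: 1; 1; 1; 0; 1]%N);
  (((true, false, false, false, false), (false, true, false, false, true)), [:: 1; 1; 1; 0; 1]%N);
  (((true, false, false, false, false), (false, false, false, true, true)), [:: 1; 1; 1; 0; 1]%N);
  (((true, false, false, false, false), (false, true, false, true, true)), [:: 1; 1; 1; 0; 1]%N);
  (((true, false, false, false, false), (false, false, true, true, true)), [:: 1; 1; 1; 0; 1]%N);
  (((true, false, false, false, false), (false, true, true, true, true)), [:: 1; 1; 1; 0; 1]%N);
  (((false, false, false, false, false), (false, false, false, false, false)), [:: 1; 0; 1; 0; 1]%N);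
  (((false, false, false, false, false), (false, false, false, false, true)), [:: 1; 1; 1; 0; 0]%N);
  (((false, false, false, false, false), (false, true, false, false, true)), [:: 1; 1; 1; 0; 0]%N);
  (((false, false, false, false, false), (false, false, false, true, true)), [:: 1; 1; 1; 0; 0]%N);
  (((false, false, false, false, false), (false, true, false, true, true)), [:: 1; 1; 1; 0; 0]%N);
  (((false, false, false, false, false), (false, false, true, true, true)), [:: 1; 1; 0; 0; 0]%N);
  (((false, false, false, false, false), (false, true, true, true, true)), [:: 1; 0; 0; 0; 0]%N);
  (((false, false, false, false, false), (true, true, true, true, true)), [:: 0; 0; 0; 0; 0]%N)].
Definition phi3 : seq (seq int) := [:: [:: 0%Z; 0%Z; -1%Z; 0%Z; 0%Z]; [:: 1%Z; 0%Z; 1%Z; 1%Z; 1%Z]; [:: 0%Z; 0%Z; 0%Z; 0%Z; 0%Z]; [:: 0%Z; 0%Z; 1%Z; 0%Z; 0%Z]; [:: -1%Z; 0%Z; -1%Z; 0%Z; 0%Z]].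

Definition rel3d : seq (nat*nat) := [:: (1,0); (2,0); (3,0); (4,0); (4,1); (3,2); (4,2); (4,3)]%N.
Definition tbl3d : seq ((tup*tup) * seq nat) :=
  [:: (((true, true, true, true, true), (true, false, false, false, false)), [:: 0; 1; 2; 0; 0]%N);
  (((false, true, false, false, true), (true, true, false, false, false)), [:: 0; 0; 1; 0; 1]%N);
  (((false, false, true, true, true), (true, false, true, false, false)), [:: 1; 1; 0; 0; 1]%N);
  (((false, false, false, true, true), (true, false, true, true, false)), [:: 1; 1; 0; 0; 1]%N);
  (((false, false, false, false, true), (true, true, true, true, true)), [:: 0; 1; 1; 0; 0]%N);
  (((false, false, false, false, false), (true, true, true, true, true)), [:: 0; 0; 0; 0; 0]%N);
  (((false, false, false, false, false), (true, true, true, true, false)), [:: 0; 1; 1; 0; 1]%N);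
  (((false, false, false, false, true), (true, true, true, true, false)), [:: 0; 1; 1; 0; 1]%N);
  (((false, false, false, false, false), (true, false, true, true, false)), [:: 0; 1; 1; 0; 1]%N);
  (((false, false, false, false, true), (true, false, true, true, false)), [:: 1; 1; 0; 0; 1]%N);
  (((false, false, false, false, false), (true, true, true, false, false)), [:: 0; 1; 1; 0; 1]%N);
  (((false, false, false, false, true), (true, true, true, false, false)), [:: 0; 1; 1; 0; 1]%N);
  (((false, false, false, false, false), (true, false, true, false, false)), [:: 0; 1; 1; 0; 1]%N);
  (((false, false, false, false, true), (true, false, true, false, false)), [:: 1; 1; 0; 0; 1]%N);
  (((false, false, false, true, true), (true, false, true, false, false)), [:: 1; 1; 0; 0; 1]%N);
  (((false, false, false, false, false), (true, true, false, false, false)), [:: 0; 1; 1; 0; 1]%N);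
  (((false, false, false, false, true), (true, true, false, false, false)), [:: 0; 1; 1; 0; 1]%N);
  (((false, false, false, false, false), (true, false, false, false, false)), [:: 0; 1; 1; 0; 1]%N);
  (((false, false, false, false, true), (true, false, false, false, false)), [:: 1; 1; 1; 0; 1]%N);
  (((false, true, false, false, true), (true, false, false, false, false)), [:: 1; 1; 1; 0; 1]%N);
  (((false, false, false, true, true), (true, false, false, false, false)), [:: 1; 1; 1; 0; 1]%N);
  (((false, true, false, true, true), (true, false, false, false, false)), [:: 1; 1; 1; 0; 1]%N);
  (((false, false, true, true, true), (true, false, false, false, false)), [:: 1; 1; 1; 0; 1]%N);
  (((false, true, true, true, true), (true, false, false, false, false)), [:: 1; 1; 1; 0; 1]%N);
  (((false, false, false, false, false), (false, false, false, false, false)), [:: 1; 0; 1; 0; 1]%N);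
  (((false, false, false, false, true), (false, false, false, false, false)), [:: 1; 1; 1; 0; 0]%N);
  (((false, true, false, false, true), (false, false, false, false, false)), [:: 1; 1; 1; 0; 0]%N);
  (((false, false, false, true, true), (false, false, false, false, false)), [:: 1; 1; 1; 0; 0]%N);
  (((false, true, false, true, true), (false, false, false, false, false)), [:: 1; 1; 1; 0; 0]%N);
  (((false, false, true, true, true), (false, false, false, false, false)), [:: 1; 1; 0; 0; 0]%N);
  (((false, true, true, true, true), (false, false, false, false, false)), [:: 1; 0; 0; 0; 0]%N);
  (((true, true, true, true, true), (false, false, false, false, false)), [:: 0; 0; 0; 0; 0]%N)].
Definition phi3d : seq (seq int) := [:: [:: 0%Z; 0%Z; -1%Z; 0%Z; 0%Z]; [:: 1%Z; 0%Z; 1%Z; 1%Z; 1%Z]; [:: 0%Z; 0%Z; 0%Z; 0%Z; 0%Z]; [:: 0%Z; 0%Z; 1%Z; 0%Z; 0%Z]; [:: -1%Z; 0%Z; -1%Z; 0%Z; 0%Z]].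

Definition rel4 : seq (nat*nat) := [:: (0,4); (0,2); (0,3); (4,2); (1,2); (1,3)]%N.
Definition tbl4 : seq ((tup*tup) * seq nat) :=
  [:: (((true, false, false, false, false), (true, false, true, true, true)), [:: 0; 1; 0; 0; 0]%N);
  (((false, true, false, false, false), (false, true, true, true, false)), [:: 0; 0; 0; 1; 1]%N);
  (((true, true, true, false, true), (false, false, true, false, false)), [:: 0; 0; 0; 1; 0]%N);
  (((true, true, false, true, false), (false, false, false, true, false)), [:: 0; 1; 0; 0; 1]%N);
  (((true, false, false, false, true), (false, false, true, false, true)), [:: 0; 1; 0; 0; 0]%N);
  (((true, true, true, true, true), (false, false, false, false, false)), [:: 0; 0; 0; 0; 0]%N);
  (((true, true, false, true, true), (false, false, false, false, false)), [:: 0; 0; 1; 0; 0]%N);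
  (((true, true, true, false, true), (false, false, false, false, false)), [:: 0; 0; 0; 1; 0]%N);
  (((true, true, false, false, true), (false, false, false, false, false)), [:: 0; 0; 1; 1; 1]%N);
  (((true, true, false, false, true), (false, false, true, false, false)), [:: 0; 0; 1; 1; 1]%N);
  (((true, false, false, false, true), (false, false, false, false, false)), [:: 0; 0; 1; 1; 1]%N);
  (((true, false, false, false, true), (false, false, true, false, false)), [:: 0; 0; 1; 1; 1]%N);
  (((true, true, false, true, false), (false, false, false, false, false)), [:: 0; 0; 1; 0; 0]%N);
  (((true, true, false, false, false), (false, false, false, false, false)), [:: 0; 1; 0; 1; 1]%N);
  (((true, true, false, false, false), (false, false, true, false, false)), [:: 0; 1; 0; 1; 1]%N);
  (((true, true, false, false, false), (false, false, false, true, false)), [:: 0; 1; 0; 1; 1]%N);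
  (((true, true, false, false, false), (false, false, true, true, false)), [:: 0; 1; 0; 1; 1]%N);
  (((false, true, false, false, false), (false, false, false, false, false)), [:: 0; 1; 0; 1; 1]%N);
  (((false, true, false, false, false), (false, false, true, false, false)), [:: 0; 1; 0; 1; 1]%N);
  (((false, true, false, false, false), (false, false, false, true, false)), [:: 0; 1; 0; 1; 1]%N);
  (((false, true, false, false, false), (false, false, true, true, false)), [:: 0; 1; 0; 1; 1]%N);
  (((true, false, false, false, false), (false, false, false, false, false)), [:: 0; 1; 0; 1; 1]%N);
  (((true, false, false, false, false), (false, false, true, false, false)), [:: 0; 1; 0; 1; 1]%N);
  (((true, false, false, false, false), (false, false, false, true, false)), [:: 0; 1; 0; 0; 1]%N);
  (((true, false, false, false, false), (false, false, true, true, false)), [:: 0; 1; 0; 0; 1]%N);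
  (((true, false, false, false, false), (false, false, true, false, true)), [:: 1; 1; 0; 0; 1]%N);
  (((true, false, false, false, false), (false, false, true, true, true)), [:: 1; 1; 0; 0; 0]%N);
  (((false, false, false, false, false), (false, false, false, false, false)), [:: 0; 1; 0; 1; 1]%N);
  (((false, false, false, false, false), (false, false, true, false, false)), [:: 0; 1; 0; 1; 1]%N);
  (((false, false, false, false, false), (false, false, false, true, false)), [:: 0; 1; 0; 0; 1]%N);
  (((false, false, false, false, false), (false, false, true, true, false)), [:: 0; 1; 0; 0; 1]%N);
  (((false, false, false, false, false), (false, true, true, true, false)), [:: 0; 0; 0; 0; 1]%N);
  (((false, false, false, false, false), (false, false, true, false, true)), [:: 1; 1; 0; 0; 0]%N);
  (((false, false, false, false, false), (false, false, true, true, true)), [:: 1; 1; 0; 0; 0]%N);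
  (((false, false, false, false, false), (true, false, true, true, true)), [:: 0; 1; 0; 0; 0]%N);
  (((false, false, false, false, false), (false, true, true, true, true)), [:: 1; 0; 0; 0; 0]%N);
  (((false, false, false, false, false), (true, true, true, true, true)), [:: 0; 0; 0; 0; 0]%N)].
Definition phi4 : seq (seq int) := [:: [:: 0%Z; 1%Z; 0%Z; 0%Z; 0%Z]; [:: 0%Z; 0%Z; 0%Z; -1%Z; 0%Z]; [:: 0%Z; 0%Z; 0%Z; 0%Z; 0%Z]; [:: 0%Z; -1%Z; 0%Z; 0%Z; 0%Z]; [:: 1%Z; 0%Z; 0%Z; 1%Z; 0%Z]].

Definition rel4d : seq (nat*nat) := [:: (4,0); (2,0); (3,0); (2,4); (2,1); (3,1)]%N.
Definition tbl4d : seq ((tup*tup) * seq nat) :=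
  [:: (((true, false, true, true, true), (true, false, false, false, false)), [:: 0; 1; 0; 0; 0]%N);
  (((false, true, true, true, false), (false, true, false, false, false)), [:: 0; 0; 0; 1; 1]%N);
  (((false, false, true, false, false), (true, true, true, false, true)), [:: 0; 0; 0; 1; 0]%N);
  (((false, false, false, true, false), (true, true, false, true, false)), [:: 0; 1; 0; 0; 1]%N);
  (((false, false, true, false, true), (true, false, false, false, true)), [:: 0; 1; 0; 0; 0]%N);
  (((false, false, false, false, false), (true, true, true, true, true)), [:: 0; 0; 0; 0; 0]%N);
  (((false, false, false, false, false), (true, true, false, true, true)), [:: 0; 0; 1; 0; 0]%N);
  (((false, false, false, false, false), (true, true, true, false, true)), [:: 0; 0; 0; 1; 0]%N);
  (((false, false, false, false, false), (true, true, false, false, true)), [:: 0; 0; 1; 1; 1]%N);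
  (((false, false, true, false, false), (true, true, false, false, true)), [:: 0; 0; 1; 1; 1]%N);
  (((false, false, false, false, false), (true, false, false, false, true)), [:: 0; 0; 1; 1; 1]%N);
  (((false, false, true, false, false), (true, false, false, false, true)), [:: 0; 0; 1; 1; 1]%N);
  (((false, false, false, false, false), (true, true, false, true, false)), [:: 0; 0; 1; 0; 0]%N);
  (((false, false, false, false, false), (true, true, false, false, false)), [:: 0; 1; 0; 1; 1]%N);
  (((false, false, true, false, false), (true, true, false, false, false)), [:: 0; 1; 0; 1; 1]%N);
  (((false, false, false, true, false), (true, true, false, false, false)), [:: 0; 1; 0; 1; 1]%N);
  (((false, false, true, true, false), (true, true, false, false, false)), [:: 0; 1; 0; 1; 1]%N);
  (((false, false, false, false, false), (false, true, false, false, false)), [:: 0; 1; 0; 1; 1]%N);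
  (((false, false, true, false, false), (false, true, false, false, false)), [:: 0; 1; 0; 1; 1]%N);
  (((false, false, false, true, false), (false, true, false, false, false)), [:: 0; 1; 0; 1; 1]%N);
  (((false, false, true, true, false), (false, true, false, false, false)), [:: 0; 1; 0; 1; 1]%N);
  (((false, false, false, false, false), (true, false, false, false, false)), [:: 0; 1; 0; 1; 1]%N);
  (((false, false, true, false, false), (true, false, false, false, false)), [:: 0; 1; 0; 1; 1]%N);
  (((false, false, false, true, false), (true, false, false, false, false)), [:: 0; 1; 0; 0; 1]%N);
  (((false, false, true, true, false), (true, false, false, false, false)), [:: 0; 1; 0; 0; 1]%N);
  (((false, false, true, false, true), (true, false, false, false, false)), [:: 1; 1; 0; 0; 1]%N);
  (((false, false, true, true, true), (true, false, false, false, false)), [:: 1; 1; 0; 0; 0]%N);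
  (((false, false, false, false, false), (false, false, false, false, false)), [:: 0; 1; 0; 1; 1]%N);
  (((false, false, true, false, false), (false, false, false, false, false)), [:: 0; 1; 0; 1; 1]%N);
  (((false, false, false, true, false), (false, false, false, false, false)), [:: 0; 1; 0; 0; 1]%N);
  (((false, false, true, true, false), (false, false, false, false, false)), [:: 0; 1; 0; 0; 1]%N);
  (((false, true, true, true, false), (false, false, false, false, false)), [:: 0; 0; 0; 0; 1]%N);
  (((false, false, true, false, true), (false, false, false, false, false)), [:: 1; 1; 0; 0; 0]%N);
  (((false, false, true, true, true), (false, false, false, false, false)), [:: 1; 1; 0; 0; 0]%N);
  (((true, false, true, true, true), (false, false, false, false, false)), [:: 0; 1; 0; 0; 0]%N);
  (((false, true, true, true, true), (false, false, false, false, false)), [:: 1; 0; 0; 0; 0]%N);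
  (((true, true, true, true, true), (false, false, false, false, false)), [:: 0; 0; 0; 0; 0]%N)].
Definition phi4d : seq (seq int) := [:: [:: 0%Z; 1%Z; 0%Z; 0%Z; 0%Z]; [:: 0%Z; 0%Z; 0%Z; -1%Z; 0%Z]; [:: 0%Z; 0%Z; 0%Z; 0%Z; 0%Z]; [:: 0%Z; -1%Z; 0%Z; 0%Z; 0%Z]; [:: 1%Z; 0%Z; 0%Z; 1%Z; 0%Z]].

Definition rel5 : seq (nat*nat) := [:: (0,2); (0,3); (1,2); (1,3); (2,4); (3,4); (0,4); (1,4)]%N.
Definition tbl5 : seq ((tup*tup) * seq nat) :=
  [:: (((true, false, false, false, false), (true, false, true, true, true)), [:: 0; 1; 1; 0; 0]%N);
  (((false, true, false, false, false), (false, true, true, true, true)), [:: 0; 0; 1; 0; 0]%N);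
  (((true, true, true, false, false), (false, false, true, false, true)), [:: 0; 1; 0; 0; 1]%N);
  (((true, true, false, true, false), (false, false, false, true, true)), [:: 0; 1; 0; 0; 1]%N);
  (((true, true, true, true, true), (false, false, false, false, true)), [:: 0; 0; 1; 1; 0]%N);
  (((true, true, true, true, true), (false, false, false, false, false)), [:: 0; 0; 0; 0; 0]%N);
  (((true, true, true, true, false), (false, false, false, false, false)), [:: 0; 0; 1; 1; 2]%N);
  (((true, true, true, true, false), (false, false, false, false, true)), [:: 0; 0; 1; 1; 2]%N);
  (((true, true, false, true, false), (false, false, false, false, false)), [:: 0; 0; 1; 1; 2]%N);
  (((true, true, false, true, false), (false, false, false, false, true)), [:: 0; 0; 1; 1; 1]%N);
  (((true, true, true, false, false), (false, false, false, false, false)), [:: 0; 0; 1; 1; 2]%N);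
  (((true, true, true, false, false), (false, false, false, false, true)), [:: 0; 0; 1; 1; 2]%N);
  (((true, true, false, false, false), (false, false, false, false, false)), [:: 0; 0; 1; 1; 2]%N);
  (((true, true, false, false, false), (false, false, false, false, true)), [:: 0; 0; 1; 1; 1]%N);
  (((true, true, false, false, false), (false, false, true, false, true)), [:: 0; 1; 2; 1; 0]%N);
  (((true, true, false, false, false), (false, false, false, true, true)), [:: 0; 1; 1; 2; 0]%N);
  (((true, true, false, false, false), (false, false, true, true, true)), [:: 0; 1; 1; 0; 0]%N);
  (((false, true, false, false, false), (false, false, false, false, false)), [:: 0; 1; 1; 1; 1]%N);
  (((false, true, false, false, false), (false, false, false, false, true)), [:: 0; 1; 1; 1; 1]%N);
  (((false, true, false, false, false), (false, false, true, false, true)), [:: 0; 1; 2; 1; 0]%N);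
  (((false, true, false, false, false), (false, false, false, true, true)), [:: 0; 1; 1; 2; 0]%N);
  (((false, true, false, false, false), (false, false, true, true, true)), [:: 0; 1; 1; 0; 0]%N);
  (((true, false, false, false, false), (false, false, false, false, false)), [:: 0; 1; 1; 1; 1]%N);
  (((true, false, false, false, false), (false, false, false, false, true)), [:: 0; 1; 1; 1; 1]%N);
  (((true, false, false, false, false), (false, false, true, false, true)), [:: 0; 1; 2; 1; 0]%N);
  (((true, false, false, false, false), (false, false, false, true, true)), [:: 0; 1; 1; 2; 0]%N);
  (((true, false, false, false, false), (false, false, true, true, true)), [:: 0; 1; 1; 0; 0]%N);
  (((false, false, false, false, false), (false, false, false, false, false)), [:: 0; 1; 1; 1; 1]%N);
  (((false, false, false, false, false), (false, false, false, false, true)), [:: 0; 1; 1; 1; 1]%N);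
  (((false, false, false, false, false), (false, false, true, false, true)), [:: 0; 1; 2; 1; 0]%N);
  (((false, false, false, false, false), (false, false, false, true, true)), [:: 0; 1; 1; 2; 0]%N);
  (((false, false, false, false, false), (false, false, true, true, true)), [:: 0; 1; 1; 0; 0]%N);
  (((false, false, false, false, false), (true, false, true, true, true)), [:: 0; 1; 1; 0; 0]%N);
  (((false, false, false, false, false), (false, true, true, true, true)), [:: 0; 0; 1; 0; 0]%N);
  (((false, false, false, false, false), (true, true, true, true, true)), [:: 0; 0; 0; 0; 0]%N)].
Definition phi5 : seq (seq int) := [:: [:: 0%Z; 1%Z; 0%Z; 0%Z; 0%Z]; [:: 0%Z; 0%Z; 0%Z; 0%Z; 0%Z]; [:: 1%Z; 0%Z; 0%Z; 1%Z; 0%Z]; [:: 1%Z; 0%Z; 1%Z; 0%Z; 0%Z]; [:: 0%Z; -1%Z; -1%Z; -1%Z; 0%Z]].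

Definition rel5d : seq (nat*nat) := [:: (2,0); (3,0); (2,1); (3,1); (4,2); (4,3); (4,0); (4,1)]%N.
Definition tbl5d : seq ((tup*tup) * seq nat) :=
  [:: (((true, false, true, true, true), (true, false, false, false, false)), [:: 0; 1; 1; 0; 0]%N);
  (((false, true, true, true, true), (false, true, false, false, false)), [:: 0; 0; 1; 0; 0]%N);
  (((false, false, true, false, true), (true, true, true, false, false)), [:: 0; 1; 0; 0; 1]%N);
  (((false, false, false, true, true), (true, true, false, true, false)), [:: 0; 1; 0; 0; 1]%N);
  (((false, false, false, false, true), (true, true, true, true, true)), [:: 0; 0; 1; 1; 0]%N);
  (((false, false, false, false, false), (true, true, true, true, true)), [:: 0; 0; 0; 0; 0]%N);
  (((false, false, false, false, false), (true, true, true, true, false)), [:: 0; 0; 1; 1; 2]%N);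
  (((false, false, false, false, true), (true, true, true, true, false)), [:: 0; 0; 1; 1; 2]%N);
  (((false, false, false, false, false), (true, true, false, true, false)), [:: 0; 0; 1; 1; 2]%N);
  (((false, false, false, false, true), (true, true, false, true, false)), [:: 0; 0; 1; 1; 1]%N);
  (((false, false, false, false, false), (true, true, true, false, false)), [:: 0; 0; 1; 1; 2]%N);
  (((false, false, false, false, true), (true, true, true, false, false)), [:: 0; 0; 1; 1; 2]%N);
  (((false, false, false, false, false), (true, true, false, false, false)), [:: 0; 0; 1; 1; 2]%N);
  (((false, false, false, false, true), (true, true, false, false, false)), [:: 0; 0; 1; 1; 1]%N);
  (((false, false, true, false, true), (true, true, false, false, false)), [:: 0; 1; 2; 1; 0]%N);
  (((false, false, false, true, true), (true, true, false, false, false)), [:: 0; 1; 1; 2; 0]%N);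
  (((false, false, true, true, true), (true, true, false, false, false)), [:: 0; 1; 1; 0; 0]%N);
  (((false, false, false, false, false), (false, true, false, false, false)), [:: 0; 1; 1; 1; 1]%N);
  (((false, false, false, false, true), (false, true, false, false, false)), [:: 0; 1; 1; 1; 1]%N);
  (((false, false, true, false, true), (false, true, false, false, false)), [:: 0; 1; 2; 1; 0]%N);
  (((false, false, false, true, true), (false, true, false, false, false)), [:: 0; 1; 1; 2; 0]%N);
  (((false, false, true, true, true), (false, true, false, false, false)), [:: 0; 1; 1; 0; 0]%N);
  (((false, false, false, false, false), (true, false, false, false, false)), [:: 0; 1; 1; 1; 1]%N);
  (((false, false, false, false, true), (true, false, false, false, false)), [:: 0; 1; 1; 1; 1]%N);
  (((false, false, true, false, true), (true, false, false, false, false)), [:: 0; 1; 2; 1; 0]%N);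
  (((false, false, false, true, true), (true, false, false, false, false)), [:: 0; 1; 1; 2; 0]%N);
  (((false, false, true, true, true), (true, false, false, false, false)), [:: 0; 1; 1; 0; 0]%N);
  (((false, false, false, false, false), (false, false, false, false, false)), [:: 0; 1; 1; 1; 1]%N);
  (((false, false, false, false, true), (false, false, false, false, false)), [:: 0; 1; 1; 1; 1]%N);
  (((false, false, true, false, true), (false, false, false, false, false)), [:: 0; 1; 2; 1; 0]%N);
  (((false, false, false, true, true), (false, false, false, false, false)), [:: 0; 1; 1; 2; 0]%N);
  (((false, false, true, true, true), (false, false, false, false, false)), [:: 0; 1; 1; 0; 0]%N);
  (((true, false, true, true, true), (false, false, false, false, false)), [:: 0; 1; 1; 0; 0]%N);
  (((false, true, true, true, true), (false, false, false, false, false)), [:: 0; 0; 1; 0; 0]%N);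
  (((true, true, true, true, true), (false, false, false, false, false)), [:: 0; 0; 0; 0; 0]%N)].
Definition phi5d : seq (seq int) := [:: [:: 0%Z; 1%Z; 0%Z; 0%Z; 0%Z]; [:: 0%Z; 0%Z; 0%Z; 0%Z; 0%Z]; [:: 1%Z; 0%Z; 0%Z; 1%Z; 0%Z]; [:: 1%Z; 0%Z; 1%Z; 0%Z; 0%Z]; [:: 0%Z; -1%Z; -1%Z; -1%Z; 0%Z]].

Lemma intr_sum (R : realFieldType) (F : 'I_5 -> int) :
  ((\sum_(i < 5) F i)%:~R : R) = \sum_(i < 5) (F i)%:~R.
Proof. by rewrite rmorph_sum. Qed.

Section Gen.
Variables (R : realFieldType) (d : Order.disp_t) (T : finPOrderType d).
Variables (s : seq (nat * nat)) (tbl : tbltype) (phi : seq (seq int)).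
Hypothesis Hall : check_all s tbl phi.
Variable g : 'I_5 -> T.
Hypothesis ginj : injective g.
Hypothesis gemb : forall x y, (g x <= g y)%O = le_of s x y.

Definition mkO (P : 'I_5 -> bool) : tup := mk (fun i => P (inord i)).

Lemma getO P i : (i < 5)%N -> get (mkO P) i = P (inord i).
Proof. by move=> Hi; rewrite /mkO get_mk. Qed.

Lemma lenat_g i j : (i < 5)%N -> (j < 5)%N ->
  lenat s i j = (g (inord i) <= g (inord j))%O.
Proof. by move=> Hi Hj; rewrite gemb /le_of /lenat -(inj_eq val_inj) /= !inordK. Qed.

Definition tau (p : T) : tup * tup :=
  (mkO (fun i => g i <= p)%O, mkO (fun i => p <= g i)%O).

Lemma tau_img o : tau (g o) = imgtype s o.
Proof.
rewrite /tau /imgtype /mkO; congr pair; apply: eq_mk => i Hi.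
  by rewrite gemb /le_of /lenat /= inordK // -(inj_eq val_inj) /= inordK.
by rewrite gemb /le_of /lenat /= inordK // -(inj_eq val_inj) /= inordK.
Qed.

Lemma getD p i : (i < 5)%N -> get (tau p).1 i = (g (inord i) <= p)%O.
Proof. by move=> Hi; rewrite getO. Qed.
Lemma getU p i : (i < 5)%N -> get (tau p).2 i = (p <= g (inord i))%O.
Proof. by move=> Hi; rewrite getO. Qed.

Lemma tau_valid p : validb s (tau p).
Proof.
apply/and4P; split.
- apply/allP => i; rewrite in_idx => Hi; apply/allP => j; rewrite in_idx => Hj.
  rewrite ?getD ?getU // lenat_g //; apply/implyP => /andP[H1 H2].
  exact: le_trans H2 H1.
- apply/allP => i; rewrite in_idx => Hi; apply/allP => j; rewrite in_idx => Hj.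
  rewrite ?getD ?getU // lenat_g //; apply/implyP => /andP[H1 H2].
  exact: le_trans H1 H2.
- apply/allP => i; rewrite in_idx => Hi; apply/allP => j; rewrite in_idx => Hj.
  rewrite ?getD ?getU // lenat_g //; apply/implyP => /andP[H1 H2].
  exact: le_trans H1 H2.
- case: (pickP (fun o => (g o <= p)%O && (p <= g o)%O)) => [o /andP[H1 H2] | Hn].
    have Ep : p = g o.
      by apply: le_anti; apply/andP; split.
    apply/orP; right; apply/hasP; exists (val o); first by rewrite in_idx ltn_ord.
    by rewrite Ep tau_img.
  apply/orP; left; apply/allP => i; rewrite in_idx => Hi.
  by rewrite getD // getU // Hn.
Qed.

Lemma tau_in p : exists2 x, x \in tbl & x.1 = tau p.
Proof.
case/and5P: Hall => _ _ Hv _ /andP[_ _].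
have := allP Hv (tau p).1 (in_allsub _) => /allP /(_ (tau p).2 (in_allsub _)).
rewrite -surjective_pairing tau_valid /= => /mapP [x Hx E].
by exists x.
Qed.

Definition rt (p : T) (i : nat) : nat := rate tbl (tau p) i.
Definition off (p z : T) : R := \sum_(i < 5 | g i == z) (rt p i)%:R.
Definition Lg (p z : T) : R :=
  if z == p then - \sum_(w | w != p) off p w else off p z.

Lemma off_ge0 p z : 0 <= off p z.
Proof. by apply: sumr_ge0 => i _; rewrite ler0n. Qed.

Lemma Lg_gen : is_generator Lg.
Proof.
split.
  by move=> x y Hxy; rewrite /Lg eq_sym (negbTE Hxy) off_ge0.
move=> x; rewrite (bigD1 x) //= /Lg eqxx.
rewrite (eq_bigr (fun z => off x z)); first by rewrite addNr.
by move=> z /negbTE ->.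
Qed.

Lemma Lset_out p (G : {set T}) : p \notin G ->
  Lset Lg p G = (sumV (rt p) (mkO (fun i => g i \in G)))%:R.
Proof.
move=> pG; rewrite /Lset.
transitivity (\sum_(z in G) off p z).
  apply: eq_bigr => z zG; rewrite /Lg; case: eqP => // E.
  by move: pG; rewrite -E zG.
rewrite /off (exchange_big_dep (fun i => g i \in G)) /=; last by move=> z i zG /eqP ->.
rewrite natr_sumV big_mkcond; apply: eq_bigr => i _.
rewrite getO ?ltn_ord // inord_val.
case: ifP => giG.
  rewrite (big_pred1 (g i)) // => z /=.
  by rewrite eq_sym; case: eqP => [->|_]; rewrite ?giG ?andbF.
by [].
Qed.

Lemma rt_tbl (x : (tup*tup) * seq nat) p : x \in tbl -> x.1 = tau p -> forall i, (i < 5)%N -> rt p i = nthr x.2 i.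
Proof.
move=> Hx E i Hi; case/and5P: Hall => _ Hr _ _ _.
have /eqP/eq_in_map H := allP Hr x Hx.
by rewrite /rt -E; apply: H; rewrite in_idx.
Qed.

Lemma mono_use V (x1 y1 : (tup*tup) * seq nat) : x1 \in tbl -> y1 \in tbl -> letype x1.1 y1.1 ->
  (upb s V && disjb V y1.1.1 -> sumV (nthr x1.2) V <= sumV (nthr y1.2) V)%N /\
  (downb s V && disjb V x1.1.2 -> sumV (nthr y1.2) V <= sumV (nthr x1.2) V)%N.
Proof.
move=> Hx Hy Hle; case/and5P: Hall => Hm _ _ _ _.
have := allP Hm V (in_allsub V); rewrite /mono_body.
move=> /allP/(_ _ (map_f (fun x => (x.1, sumV (nthr x.2) V)) Hx)).
move=> /allP/(_ _ (map_f (fun x => (x.1, sumV (nthr x.2) V)) Hy)).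
move=> /implyP/(_ Hle)/andP[/implyP A /implyP B].
by split.
Qed.

Lemma letype_le x y : (x <= y)%O -> letype (tau x) (tau y).
Proof.
move=> xy; apply/andP; split; apply/allP => i; rewrite in_idx => Hi.
  by rewrite !getD //; apply/implyP => H; apply: le_trans H xy.
by rewrite !getU //; apply/implyP => H; apply: le_trans xy H.
Qed.

Lemma Lg_mono : stoch_monotone Lg.
Proof.
split.
- move=> G x y Gup xy yG.
  have xG : x \notin G by apply/negP => xG; move: yG; rewrite (Gup x y xG xy).
  rewrite !Lset_out // ler_nat.
  case: (tau_in x) => x1 Hx1 E1; case: (tau_in y) => y1 Hy1 E2.
  rewrite (eq_sumV _ _ _ (rt_tbl _ _ Hx1 E1)) (eq_sumV _ _ _ (rt_tbl _ _ Hy1 E2)).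
  have Hle : letype x1.1 y1.1 by rewrite E1 E2 letype_le.
  case: (mono_use (mkO (fun i => g i \in G)) _ _ Hx1 Hy1 Hle) => H _; apply: H.
  apply/andP; split.
    apply/allP => i; rewrite in_idx => Hi; apply/allP => j; rewrite in_idx => Hj.
    rewrite !getO // lenat_g //; apply/implyP => /andP[H1 H2].
    exact: Gup _ _ H1 H2.
  apply/allP => i; rewrite in_idx => Hi; rewrite E2 getO // getD //.
  apply/negP => /andP[H1 H2]; move: yG; by rewrite (Gup _ _ H1 H2).
- move=> G x y Gdn xy xG.
  have yG : y \notin G by apply/negP => yG; move: xG; rewrite (Gdn y x yG xy).
  rewrite !Lset_out // ler_nat.
  case: (tau_in x) => x1 Hx1 E1; case: (tau_in y) => y1 Hy1 E2.
  rewrite (eq_sumV _ _ _ (rt_tbl _ _ Hx1 E1)) (eq_sumV _ _ _ (rt_tbl _ _ Hy1 E2)).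
  have Hle : letype x1.1 y1.1 by rewrite E1 E2 letype_le.
  case: (mono_use (mkO (fun i => g i \in G)) _ _ Hx1 Hy1 Hle) => _ H; apply: H.
  apply/andP; split.
    apply/allP => i; rewrite in_idx => Hi; apply/allP => j; rewrite in_idx => Hj.
    rewrite !getO // lenat_g //; apply/implyP => /andP[H1 H2].
    exact: Gdn _ _ H1 H2.
  apply/allP => i; rewrite in_idx => Hi; rewrite E1 getO // getU //.
  apply/negP => /andP[H1 H2]; move: xG; by rewrite (Gdn _ _ H1 H2).
Qed.

Lemma Lg_img (a b : 'I_5) : a != b -> Lg (g a) (g b) = (rate tbl (imgtype s a) b)%:R.
Proof.
move=> ab; rewrite /Lg (inj_eq ginj) eq_sym (negbTE ab) /off (big_pred1 b).
  by rewrite /rt tau_img.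
by move=> i /=; rewrite (inj_eq ginj).
Qed.

Lemma Lg_out (a : 'I_5) z : (forall t, g t != z) -> Lg (g a) z = 0.
Proof.
move=> H; rewrite /Lg eq_sym (negbTE (H a)) /off big_pred0 // => i.
exact: negbTE (H i).
Qed.

Lemma Lg_nr : ~ realizably_monotone Lg.
Proof.
case=> Lam [Hpos Heq].
case/and5P: Hall => _ _ _ Hc /andP[Hd Hn].
have Hdiag (a : 'I_5) : phiz phi a a = 0.
  by apply/eqP; apply: (allP Hd); rewrite in_idx ltn_ord.
set Phi := \sum_(a < 5) \sum_(b < 5) (phiz phi a b)%:~R * Lg (g a) (g b).
have Hlt : Phi < 0.
  have -> : Phi = ((\sum_(a < 5) \sum_(b < 5)
       (phiz phi a b * (rate tbl (imgtype s a) b)%:Z))%:~R).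
    rewrite intr_sum; apply: eq_bigr => a _; rewrite intr_sum.
    apply: eq_bigr => b _; case: (eqVneq a b) => [<-|ab].
      by rewrite Hdiag !mul0r.
    by rewrite Lg_img // intrM.
  by rewrite ltrz0 (dsum_foldr (fun a b => phiz phi a b * (rate tbl (imgtype s a) b)%:Z)).
have Hge : 0 <= Phi.
  have -> : Phi = \sum_(f : {ffun T -> T} | increasing f) \sum_(a < 5) \sum_(b < 5)
        Lam f * ((phiz phi a b)%:~R * (f (g a) == g b)%:R).
    rewrite exchange_big; apply: eq_bigr => a _; rewrite exchange_big.
    apply: eq_bigr => b _; case: (eqVneq a b) => [<-|ab].
      by rewrite Hdiag mul0r big1 // => f _; rewrite mul0r mulr0.
    rewrite Heq ?(inj_eq ginj) // mulr_sumr big_mkcondr /=.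
    apply: eq_bigr => f _; case: eqP => _ /=; first by rewrite mulr1 mulrC.
    by rewrite mulr0n !mulr0.
  apply: sumr_ge0 => f incf.
  under eq_bigr do rewrite -mulr_sumr.
  rewrite -mulr_sumr.
  case: (eqVneq (Lam f) 0) => [->|Lnz]; first by rewrite mul0r.
  apply: mulr_ge0; first exact: Hpos.
  have good (a : 'I_5) : g (odflt a [pick b | f (g a) == g b]) = f (g a).
    case: pickP => [b /eqP -> //|H] /=.
    exfalso; move/eqP: Lnz; apply.
    have Hz : f (g a) != g a by rewrite H.
    have := Heq (g a) (f (g a)); rewrite eq_sym Hz Lg_out; last by move=> t; rewrite eq_sym H.
    move=> /(_ isT) /esym E.
    have Hnn : forall f0 : {ffun T -> T}, increasing f0 && (f0 (g a) == f (g a)) -> 0 <= Lam f0.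
      by move=> f0 /andP[? _]; apply: Hpos.
    have := psumr_eq0P Hnn E.
    move=> /(_ f) /=; rewrite incf eqxx; by apply.
  set h := fun a => odflt a [pick b | f (g a) == g b].
  have -> : \sum_(a < 5) \sum_(b < 5) (phiz phi a b)%:~R * (f (g a) == g b)%:R =
            ((\sum_(a < 5) phiz phi a (h a)) %:~R : R).
    rewrite intr_sum; apply: eq_bigr => a _.
    rewrite (bigD1 (h a)) //= -[f (g a)]good eqxx mulr1 big1 ?addr0 //.
    by move=> b hb; rewrite (inj_eq ginj) eq_sym (negbTE hb) mulr0.
  rewrite ler0z.
  pose v := [seq val (h (inord i)) | i <- idx].
  have Hv : v \in allseqs 5.
    have -> : 5%N = size v by rewrite size_map size_iota.
    apply: in_allseqs; apply/allP => x /mapP [i _ ->]; exact: ltn_ord.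
  have Hnth i : (i < 5)%N -> nth 0%N v i = val (h (inord i)).
    by move=> Hi; rewrite (nth_map 0%N) ?size_iota // nth_iota.
  have Hinc : incb s v.
    apply/allP => i; rewrite in_idx => Hi; apply/allP => j; rewrite in_idx => Hj.
    rewrite !Hnth // lenat_g //; apply/implyP => Hij.
    have : (g (h (inord i)) <= g (h (inord j)))%O.
      rewrite /h !good.
      by move/forallP: incf => /(_ (g (inord i))) /forallP /(_ (g (inord j))) /implyP; apply.
    by rewrite gemb.
  have := allP Hc v Hv; rewrite Hinc /= => Hcost.
  have -> : \sum_(a < 5) phiz phi a (h a) = cost phi v.
    rewrite (eq_bigr (fun a : 'I_5 => phiz phi a (val (h (inord a))))); last first.
      by move=> a _; rewrite inord_val.
    by rewrite (@sum_foldr _ (fun a => phiz phi a (val (h (inord a))))).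
  exact: Hcost.
by move: Hlt; rewrite ltNge Hge.
Qed.

Lemma gen_main : exists L : T -> T -> R,
  is_generator L /\ stoch_monotone L /\ ~ realizably_monotone L.
Proof. by exists Lg; split; [exact: Lg_gen | split; [exact: Lg_mono | exact: Lg_nr]]. Qed.
End Gen.

Definition tbl_of (k : nat) : tbltype :=
  match k with 1 => tbl1 | 2 => tbl2 | 3 => tbl3 | 4 => tbl4 | _ => tbl5 end%N.
Definition tbld_of (k : nat) : tbltype :=
  match k with 1 => tbl1d | 2 => tbl2d | 3 => tbl3d | 4 => tbl4d | _ => tbl5d end%N.
Definition phi_of (k : nat) : seq (seq int) :=
  match k with 1 => phi1 | 2 => phi2 | 3 => phi3 | 4 => phi4 | _ => phi5 end%N.
Definition swaprel (s : seq (nat * nat)) : seq (nat * nat) := [seq (p.2, p.1) | p <- s].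

Lemma chk1 : check_all (S_rel 1) (tbl_of 1) (phi_of 1). Proof. vm_compute. reflexivity. Qed.
Lemma chk2 : check_all (S_rel 2) (tbl_of 2) (phi_of 2). Proof. vm_compute. reflexivity. Qed.
Lemma chk3 : check_all (S_rel 3) (tbl_of 3) (phi_of 3). Proof. vm_compute. reflexivity. Qed.
Lemma chk4 : check_all (S_rel 4) (tbl_of 4) (phi_of 4). Proof. vm_compute. reflexivity. Qed.
Lemma chk5 : check_all (S_rel 5) (tbl_of 5) (phi_of 5). Proof. vm_compute. reflexivity. Qed.
Lemma chk1d : check_all (swaprel (S_rel 1)) (tbld_of 1) (phi_of 1). Proof. vm_compute. reflexivity. Qed.
Lemma chk2d : check_all (swaprel (S_rel 2)) (tbld_of 2) (phi_of 2). Proof. vm_compute. reflexivity. Qed.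
Lemma chk3d : check_all (swaprel (S_rel 3)) (tbld_of 3) (phi_of 3). Proof. vm_compute. reflexivity. Qed.
Lemma chk4d : check_all (swaprel (S_rel 4)) (tbld_of 4) (phi_of 4). Proof. vm_compute. reflexivity. Qed.
Lemma chk5d : check_all (swaprel (S_rel 5)) (tbld_of 5) (phi_of 5). Proof. vm_compute. reflexivity. Qed.

Lemma chk k : (1 <= k <= 5)%N ->
  check_all (S_rel k) (tbl_of k) (phi_of k) /\ check_all (swaprel (S_rel k)) (tbld_of k) (phi_of k).
Proof.
case: k => [|[|[|[|[|[|k]]]]]] Hk.
- by [].
- by split; [exact: chk1 | exact: chk1d].
- by split; [exact: chk2 | exact: chk2d].
- by split; [exact: chk3 | exact: chk3d].
- by split; [exact: chk4 | exact: chk4d].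
- by split; [exact: chk5 | exact: chk5d].
- by [].
Qed.

Lemma swaprel_le s (x y : 'I_5) : le_of s y x = le_of (swaprel s) x y.
Proof.
rewrite /le_of eq_sym; congr orb.
apply/idP/idP => [H | /mapP [[a b] H [-> ->]] //].
by apply/mapP; exists (val y, val x).
Qed.

Theorem proposition4p2 (R : realFieldType) (d : Order.disp_t) (T : finPOrderType d) :
  (exists2 k : nat, (1 <= k <= 5)%N &
     has_induced_iso T (le_of (S_rel k)) \/ has_induced_anti_iso T (le_of (S_rel k))) ->
  exists L : T -> T -> R,
    is_generator L /\ stoch_monotone L /\ ~ realizably_monotone L.
Proof.
case=> k Hk; case: (chk k Hk) => C1 C2; case=> [[g [ginj gemb]] | [g [ginj gemb]]].
  exact: (gen_main R d T (S_rel k) (tbl_of k) (phi_of k) C1 g ginj gemb).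
apply: (gen_main R d T (swaprel (S_rel k)) (tbld_of k) (phi_of k) C2 g ginj).
by move=> x y; rewrite gemb swaprel_le.
Qed.
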